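(* Let $n\ge1$. Let $\mathscr{R}_n$ be the lattice, ordered by inclusion, of all sets $\Gamma$ of relations on $[n]=\{1,\dots,n\}$ that are closed under $\{\exists,\forall,\wedge,\vee\}$-FO-definability, and let $\mathscr{F}_n$ be the lattice, ordered by inclusion, of all down-shop-monoids on $[n]$. Then $\mathscr{R}_n$ and $\mathscr{F}_n$ are isomorphic, and the operators $\mathrm{Inv}$ and $\mathrm{shE}$ induce isomorphisms between them.
   Context: $\{\exists,\forall,\wedge,\vee\}$-FO is positive first-order logic without equality. A set $\Gamma$ of relations on $[n]$ is closed under $\{\exists,\forall,\wedge,\vee\}$-FO-definability if every relation definable by a formula of that logic over the structure $([n];\Gamma)$ (with $\Gamma$ as a possibly countably infinite signature) already belongs to $\Gamma$. A multipermutation on $[n]$ is a map $f:[n]\to\mathcal{P}([n])\setminus\{\emptyset\}$ such that every $y$ lies in some $f(x)$. $f$ preserves $R\subseteq[n]^i$ if $(x_1,\dots,x_i)\in R$ and $y_j\in f(x_j)$ imply $(y_1,\dots,y_i)\in R$. $\mathrm{Inv}(F)$ is the set of relations preserved by all $f\in F$; $\mathrm{shE}(\Gamma)$ is the set of multipermutations preserving all relations in $\Gamma$. Composition $g\circ f$ is $x\mapsto\{z:\exists y\,(y\in f(x)\wedge z\in g(y))\}$, $f$ is a sub-multipermutation of $g$ if $f(x)\subseteq g(x)$ for all $x$; a down-shop-monoid (DSM) is a set of multipermutations containing the identity $x\mapsto\{x\}$ and closed under composition and under sub-multipermutations that are multipermutations. *)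

(* Defs.v *)
From mathcomp Require Import all_boot.
Set Implicit Arguments. Unset Strict Implicit. Unset Printing Implicit Defensive.

Section Defs.
Variable n : nat.

Definition relation := {i : nat & {set i.-tuple 'I_n}}.
Definition mkrel (i : nat) (R : {set i.-tuple 'I_n}) : relation := existT _ i R.

Definition relset := relation -> Prop.

(* Formulas of {exists, forall, and, or}-FO without equality (with the
   logical constants true/false), variables are natural numbers. *)
Inductive pfo : Type :=
| PTrue : pfo
| PFalse : pfo
| PAtom (i : nat) (R : {set i.-tuple 'I_n}) (vs : i.-tuple nat) : pfo
| PAnd : pfo -> pfo -> pfo
| POr : pfo -> pfo -> pfo
| PEx : nat -> pfo -> pfo
| PAll : nat -> pfo -> pfo.

Fixpoint over (Gamma : relset) (phi : pfo) : Prop :=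
  match phi with
  | PTrue | PFalse => True
  | PAtom i R _ => Gamma (mkrel R)
  | PAnd p q | POr p q => over Gamma p /\ over Gamma q
  | PEx _ p | PAll _ p => over Gamma p
  end.

Definition upd (a : nat -> 'I_n) (x : nat) (v : 'I_n) : nat -> 'I_n :=
  fun y => if y == x then v else a y.

Fixpoint sat (a : nat -> 'I_n) (phi : pfo) : Prop :=
  match phi with
  | PTrue => True
  | PFalse => False
  | PAtom i R vs => [tuple of map a vs] \in R
  | PAnd p q => sat a p /\ sat a q
  | POr p q => sat a p \/ sat a q
  | PEx x p => exists v, sat (upd a x v) p
  | PAll x p => forall v, sat (upd a x v) p
  end.

(* phi defines the i-ary relation R, variable j (j < i) standing for the
   j-th coordinate. *)
Definition defines (i : nat) (R : {set i.-tuple 'I_n}) (phi : pfo) : Prop :=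
  forall (t : i.-tuple 'I_n) (a : nat -> 'I_n),
    (forall j : 'I_i, a j = tnth t j) -> (t \in R <-> sat a phi).

Definition closed_pfo (Gamma : relset) : Prop :=
  forall (i : nat) (R : {set i.-tuple 'I_n}) (phi : pfo),
    over Gamma phi -> defines R phi -> Gamma (mkrel R).

Definition mfun := {ffun 'I_n -> {set 'I_n}}.
Definition funset := mfun -> Prop.

Definition is_mp (f : mfun) : Prop :=
  (forall x, f x != set0) /\ (forall y, exists x, y \in f x).

Definition preserves (f : mfun) (R : relation) : Prop :=
  forall x y : (projT1 R).-tuple 'I_n,
    x \in projT2 R -> (forall j, tnth y j \in f (tnth x j)) -> y \in projT2 R.

Definition Inv (F : funset) : relset :=
  fun R => forall f, F f -> preserves f R.

Definition shE (Gamma : relset) : funset :=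
  fun f => is_mp f /\ forall R, Gamma R -> preserves f R.

Definition mp_id : mfun := [ffun x => [set x]].
Definition mp_comp (g f : mfun) : mfun := [ffun x => \bigcup_(y in f x) g y].

Definition is_DSM (F : funset) : Prop :=
  [/\ forall f, F f -> is_mp f,
      F mp_id,
      forall f g, F f -> F g -> F (mp_comp g f)
    & forall f g, F g -> is_mp f -> (forall x, f x \subset g x) -> F f].

End Defs.

(* Main.v *)
Require Import Defs.
From mathcomp Require Import all_boot.
From Stdlib Require Import FunctionalExtensionality ClassicalEpsilon.
From mathcomp Require Import zify.
Set Implicit Arguments. Unset Strict Implicit. Unset Printing Implicit Defensive.

Definition pb (P : Prop) : bool := if excluded_middle_informative P then true else false.
Lemma pbE (P : Prop) : pb P <-> P.
Proof. by rewrite /pb; case: excluded_middle_informative. Qed.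

Section Expr.
Variable n : nat.
Variable Gamma : relset n.

Definition E (P : (nat -> 'I_n) -> Prop) :=
  exists phi, Defs.over Gamma phi /\ forall a, sat a phi <-> P a.

Lemma E_ext P Q : (forall a, P a <-> Q a) -> E P -> E Q.
Proof. move=> h [phi [o s]]; exists phi; split=> // a; rewrite s h. by []. Qed.

Lemma E_and P Q : E P -> E Q -> E (fun a => P a /\ Q a).
Proof.
move=> [p [op sp]] [q [oq sq]]; exists (PAnd p q); split=> //= a.
by rewrite sp sq.
Qed.

Lemma E_or P Q : E P -> E Q -> E (fun a => P a \/ Q a).
Proof.
move=> [p [op sp]] [q [oq sq]]; exists (POr p q); split=> //= a.
by rewrite sp sq.
Qed.

Lemma E_true : E (fun _ => True).
Proof. by exists (PTrue n). Qed.
Lemma E_false : E (fun _ => False).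
Proof. by exists (PFalse n). Qed.

Lemma E_ex x P : E P -> E (fun a => exists v, P (upd a x v)).
Proof.
move=> [p [op sp]]; exists (PEx x p); split=> //= a.
split=> -[v h]; exists v; by apply/sp.
Qed.

Lemma E_all x P : E P -> E (fun a => forall v, P (upd a x v)).
Proof.
move=> [p [op sp]]; exists (PAll x p); split=> //= a.
split=> h v; by apply/sp.
Qed.

Lemma E_atom i (R : {set i.-tuple 'I_n}) (vs : i.-tuple nat) :
  Gamma (mkrel R) -> E (fun a => [tuple of map a vs] \in R).
Proof. by move=> h; exists (PAtom R vs). Qed.

Lemma E_bigand (A : eqType) (s : seq A) (P : A -> (nat -> 'I_n) -> Prop) :
  (forall x, x \in s -> E (P x)) -> E (fun a => forall x, x \in s -> P x a).
Proof.
elim: s => [|y s IH] h.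
  by apply: E_ext E_true => a; split=> // _ x.
apply: E_ext (E_and (h y (mem_head _ _)) (IH _)).
  move=> a; split=> [[h1 h2] x|H]; first by rewrite in_cons => /orP[/eqP->|/h2].
  by split=> [|x xs]; apply: H; rewrite in_cons ?eqxx ?xs ?orbT.
by move=> x xs; apply: h; rewrite in_cons xs orbT.
Qed.

Lemma E_bigor (A : eqType) (s : seq A) (P : A -> (nat -> 'I_n) -> Prop) :
  (forall x, x \in s -> E (P x)) -> E (fun a => exists x, x \in s /\ P x a).
Proof.
elim: s => [|y s IH] h.
  by apply: E_ext E_false => a; split=> // -[x []].
apply: E_ext (E_or (h y (mem_head _ _)) (IH _)).
  move=> a; split=> [[H|[x [xs H]]]|[x []]].
  - by exists y; rewrite mem_head.
  - by exists x; rewrite in_cons xs orbT.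
  by rewrite in_cons => /orP[/eqP->|xs]; [left|right; exists x].
by move=> x xs; apply: h; rewrite in_cons xs orbT.
Qed.

Definition ovr (a : nat -> 'I_n) x p (g : nat -> 'I_n) : nat -> 'I_n :=
  fun y => if (x <= y) && (y < x + p) then g y else a y.

Lemma ovr0 a x g : ovr a x 0 g = a.
Proof.
apply: functional_extensionality => y; rewrite /ovr addn0.
by case: leqP => //= h; rewrite ltnNge h.
Qed.

Lemma ovrS a x p g : ovr a x p.+1 g = ovr (upd a x (g x)) x.+1 p g.
Proof.
apply: functional_extensionality => y; rewrite /ovr /upd.
case: eqP => [->|ne]; repeat case: ifP; move=> *; try done; exfalso; lia.
Qed.

Lemma ovrS' a x p g v : ovr (upd a x v) x.+1 p g = ovr a x p.+1 (upd g x v).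
Proof.
apply: functional_extensionality => y; rewrite /ovr /upd.
case: eqP => [->|ne]; repeat case: ifP; move=> *; try done; exfalso; lia.
Qed.

Variable x0 : 'I_n.

Lemma E_allblock p x P : E P -> E (fun a => forall g, P (ovr a x p g)).
Proof.
elim: p x => [|p IH] x hP.
  by apply: E_ext hP => a; split=> [h g|h]; rewrite ?ovr0 //; have := h (fun _ => x0); rewrite ovr0.
apply: E_ext (E_all x (IH x.+1 hP)) => a; split=> h.
  by move=> g; rewrite ovrS; apply: h.
by move=> v g; rewrite ovrS'; apply: h.
Qed.

Lemma E_exblock p x P : E P -> E (fun a => exists g, P (ovr a x p g)).
Proof.
elim: p x => [|p IH] x hP.
  by apply: E_ext hP => a; split=> [h|[g]]; [exists (fun _ => x0)|]; rewrite ovr0.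
apply: E_ext (E_ex x (IH x.+1 hP)) => a; split=> -[v].
  by move=> [g h]; exists (upd g x v); rewrite -ovrS'.
by move=> h; exists (v x), v; rewrite -ovrS.
Qed.

End Expr.

Section Rel.
Variable n : nat.
Variable Gamma : relset n.

Definition tup k (a : nat -> 'I_n) : k.-tuple 'I_n := [tuple a (val j) | j < k].

Lemma tnth_tup k a (j : 'I_k) : tnth (tup k a) j = a j.
Proof. by rewrite tnth_mktuple. Qed.

Lemma nth_tup k a x0 y : y < k -> nth x0 (tup k a) y = a y.
Proof. by move=> hy; rewrite -[y]/(val (Ordinal hy)) -tnth_nth tnth_tup. Qed.

Lemma E_tup k (R : {set k.-tuple 'I_n}) :
  Gamma (mkrel R) -> E Gamma (fun a => tup k a \in R).
Proof.
move=> h; apply: E_ext (E_atom ([tuple val j | j < k]) h) => a.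
suff -> : [tuple of map a [tuple val j | j < k]] = tup k a by [].
by apply: eq_from_tnth => j; rewrite tnth_map !tnth_mktuple.
Qed.

Lemma E_rel k (R : {set k.-tuple 'I_n}) :
  closed_pfo Gamma -> E Gamma (fun a => tup k a \in R) -> Gamma (mkrel R).
Proof.
move=> hc [phi [o s]]; apply: (hc _ _ phi o) => t a ha.
have -> : t = tup k a by apply: eq_from_tnth => j; rewrite tnth_tup ha.
by rewrite s.
Qed.

Lemma pres_sat (f : mfun n) : is_mp f -> (forall R, Gamma R -> preserves f R) ->
  forall phi, Defs.over Gamma phi -> forall a b, (forall y, b y \in f (a y)) ->
  sat a phi -> sat b phi.
Proof.
move=> [ne su] hG; elim=> //=.
- move=> i R vs hR a b hab H.
  by apply: (hG _ hR _ [tuple of map b vs] H) => j; rewrite /= !tnth_map.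
- by move=> p IHp q IHq [op oq] a b hab [hp hq]; split; [apply: IHp hp|apply: IHq hq].
- by move=> p IHp q IHq [op oq] a b hab [hp|hq]; [left; apply: IHp hp|right; apply: IHq hq].
- move=> x p IH op a b hab [v hv].
  have /set0Pn [v' hv'] := ne v.
  exists v'; apply: IH hv => // y; rewrite /upd; by case: eqP.
- move=> x p IH op a b hab hv v'.
  have [v hv'] := su v'.
  apply: IH (hv v) => // y; rewrite /upd; by case: eqP.
Qed.

End Rel.

Section C.
Variable n : nat.

Lemma shE_DSM (Gamma : relset n) : is_DSM (shE Gamma).
Proof.
split.
- by move=> f [].
- split; first split.
  + by move=> x; apply/set0Pn; exists x; rewrite ffunE set11.
  + by move=> y; exists y; rewrite ffunE set11.
  + move=> [k R] _ /= x y hx hy.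
    suff -> : y = x by [].
    by apply: eq_from_tnth => j; have := hy j; rewrite ffunE => /set1P.
- move=> f g [[nef suf] pf] [[neg sug] pg]; split; first split.
  + move=> x; have /set0Pn [y hy] := nef x; have /set0Pn [z hz] := neg y.
    by apply/set0Pn; exists z; rewrite ffunE; apply/bigcupP; exists y.
  + move=> z; have [y hy] := sug z; have [x hx] := suf y.
    by exists x; rewrite ffunE; apply/bigcupP; exists y.
  + move=> [k R] hR /= x y hx hy.
    have : forall j, exists u, u \in f (tnth x j) /\ tnth y j \in g u.
      by move=> j; have := hy j; rewrite ffunE => /bigcupP [u hu hz]; exists u.
    case/fin_all_exists => u hu.
    have hU : [tuple u j | j < k] \in R.
      by apply: (pf _ hR x) => // j; rewrite tnth_mktuple; case: (hu j).
    by apply: (pg _ hR _ _ hU) => j; rewrite tnth_mktuple; case: (hu j).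
- move=> f g [_ pg] mpf sub; split=> // R hR x y hx hy.
  by apply: (pg _ hR x) => // j; apply: (subsetP (sub _)).
Qed.

Variable x0 : 'I_n.

Lemma Inv_closed (F : funset n) : is_DSM F -> closed_pfo (Inv F).
Proof.
move=> [mp _ _ _] i R phi o hdef f hf x y /= hx hy.
have /set0Pn [b0 hb0] := (mp f hf).1 x0.
have hx' := hdef x (fun k => nth x0 x k).
have hy' := hdef y (fun k => nth b0 y k).
apply/hy'; first by move=> j; rewrite -tnth_nth.
apply: (pres_sat (mp f hf) _ o (a := fun k => nth x0 x k)).
- by move=> R' hR'; apply: hR'.
- move=> k; case: (ltnP k i) => hk.
    by rewrite -[k]/(val (Ordinal hk)) -!tnth_nth.
  by rewrite !nth_default ?size_tuple.
- by apply/hx' => // j; rewrite -tnth_nth.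
Qed.

Lemma shE_Inv (F : funset n) f : is_DSM F -> shE (Inv F) f -> F f.
Proof.
move=> [mp hid hcomp hdown] [mpf pf].
pose M := #|{: 'I_n * 'I_n}|.
pose X (j : 'I_M) := (enum_val j).1.
pose K (j : 'I_M) := (enum_val j).2.
pose W : {set M.-tuple 'I_n} :=
  [set y | pb (exists g, F g /\ forall j, tnth y j \in g (X j))].
have inW y : y \in W <-> exists g, F g /\ forall j, tnth y j \in g (X j).
  by rewrite inE pbE.
have hW : Inv F (mkrel W).
  move=> h hh /= y y' /inW [g [hg hy]] hy'.
  apply/inW; exists (mp_comp h g); split; first exact: hcomp.
  by move=> j; rewrite ffunE; apply/bigcupP; exists (tnth y j).
pose yj (j : 'I_M) := if K j \in f (X j) then K j else odflt x0 [pick z in f (X j)].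
have hyj j : yj j \in f (X j).
  rewrite /yj; case: ifP => // _; case: pickP => [z //|H].
  have /set0Pn [z hz] := mpf.1 (X j); by rewrite H in hz.
have : [tuple yj j | j < M] \in W.
  apply: (pf _ hW [tuple X j | j < M]).
    by apply/inW; exists (mp_id n); split=> // j; rewrite tnth_mktuple ffunE set11.
  by move=> j; rewrite !tnth_mktuple.
case/inW => g [hg hy].
apply: (hdown f g hg mpf) => x; apply/subsetP => b hb.
have := hy (enum_rank (x, b)); rewrite tnth_mktuple /yj /X /K enum_rankK /= hb.
by [].
Qed.

End C.

Section D.
Variable n : nat.
Variable Gamma : relset n.
Hypothesis hc : closed_pfo Gamma.
Variable x0 : 'I_n.

Definition inhull k (rho t : k.-tuple 'I_n) :=
  forall D, Gamma (mkrel D) -> rho \in D -> t \in D.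

Definition hullL k (rho : k.-tuple 'I_n) :=
  [seq D <- enum {: {set k.-tuple 'I_n}} | pb (Gamma (mkrel D) /\ rho \in D)].

Lemma E_hull k (rho : k.-tuple 'I_n) : E Gamma (fun a => inhull rho (tup k a)).
Proof.
apply: E_ext (E_bigand (s := hullL rho) (P := fun D a => tup k a \in D) _).
  move=> a; split=> h D.
    by move=> GD rD; apply: h; rewrite mem_filter mem_enum andbT pbE.
  by rewrite mem_filter mem_enum andbT pbE => -[GD rD]; apply: h.
by move=> D; rewrite mem_filter mem_enum andbT pbE => -[GD rD]; apply: E_tup.
Qed.

Definition idv y : 'I_n := nth x0 (enum 'I_n) y.
Lemma idvE (b : 'I_n) : idv b = b.
Proof. by rewrite /idv nth_ord_enum. Qed.

Lemma key i (R : {set i.-tuple 'I_n}) (r s : i.-tuple 'I_n) :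
  Inv (shE Gamma) (mkrel R) -> r \in R -> inhull r s -> s \in R.
Proof.
move=> HR hr hs.
pose N := i + n + n.
pose good (rho : N.-tuple 'I_n) :=
  (forall j : 'I_N, j < i -> tnth rho j = nth x0 r j) /\
  (forall (b : 'I_n) (j : 'I_N), val j = i + n + b -> tnth rho j = b).
pose gL := [seq rho <- enum {: N.-tuple 'I_n} | pb (good rho)].
pose UP a := exists rho, rho \in gL /\ inhull rho (tup N a).
have EUP : E Gamma UP := E_bigor (fun rho _ => E_hull rho).
pose lay (a g h : nat -> 'I_n) := ovr (ovr a i n g) (i + n) n h.
pose P (a : nat -> 'I_n) := forall g, exists h, UP (lay a g h).
have EP : E Gamma P := E_allblock x0 n i (E_exblock x0 n (i + n) EUP).
have Pdep a a' : (forall y, y < i -> a y = a' y) -> P a -> P a'.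
  move=> haa hP g; have [h hh] := hP g; exists h.
  move: hh; rewrite /UP; suff -> : tup N (lay a g h) = tup N (lay a' g h) by [].
  apply: eq_from_tnth => j; rewrite !tnth_tup /lay /ovr.
  case: ifP => // h1; case: ifP => // h2; apply: haa.
  move: h1 h2; have := ltn_ord j; rewrite /N; lia.
pose P' := [set t : i.-tuple 'I_n | pb (P (fun y => nth x0 t y))].
have GP' : Gamma (mkrel P').
  apply: E_rel hc _; apply: E_ext EP => a; rewrite inE pbE.
  by split; apply: Pdep => y hy; rewrite nth_tup.
have rP' : r \in P'.
  rewrite inE pbE => g; exists (fun y => idv (y - (i + n))).
  exists (tup N (lay (fun y => nth x0 r y) g (fun y => idv (y - (i + n))))).
  split; last by [].
  rewrite mem_filter mem_enum andbT pbE; split.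
    move=> j hj; rewrite tnth_tup /lay /ovr.
    case: ifP => h1; first lia.
    case: ifP => h2; first lia.
    by [].
  move=> b j hj; rewrite tnth_tup /lay /ovr hj.
  case: ifP => h1; last by have := ltn_ord b; lia.
  by rewrite addKn idvE.
have := hs _ GP' rP'; rewrite inE pbE => /(_ (fun y => idv (y - i))).
move=> [h [rho [hrho hin]]].
move: hrho; rewrite mem_filter mem_enum andbT pbE => -[g1 g2].
set sigma := tup N _ in hin.
pose f : mfun n := [ffun x => [set tnth sigma k | k in [set k | tnth rho k == x]]].
have fP x y : y \in f x <-> exists k, tnth rho k = x /\ tnth sigma k = y.
  rewrite ffunE; split.
    by case/imsetP => k; rewrite inE => /eqP hk ->; exists k.
  by move=> [k [hk hy]]; apply/imsetP; exists k; rewrite ?inE ?hk.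
have hf : shE Gamma f.
  split; first split.
  - move=> x; apply/set0Pn.
    have hk : i + n + x < N by have := ltn_ord x; rewrite /N; lia.
    exists (tnth sigma (Ordinal hk)); apply/fP; exists (Ordinal hk); split=> //.
    exact: g2.
  - move=> y.
    have hk : i + y < N by have := ltn_ord y; rewrite /N; lia.
    exists (tnth rho (Ordinal hk)); apply/fP; exists (Ordinal hk); split=> //.
    rewrite /sigma tnth_tup /lay /ovr /=.
    case: ifP => h1; first by have := ltn_ord y; lia.
    case: ifP => h2; last by have := ltn_ord y; lia.
    by rewrite addKn idvE.
  - move=> [k Q] hQ /= x y hx hy.
    have : forall j, exists m : 'I_N, tnth rho m = tnth x j /\ tnth sigma m = tnth y j.
      by move=> j; apply/fP.
    case/fin_all_exists => m hm.
    pose D : {set N.-tuple 'I_n} := [set t | [tuple tnth t (m j) | j < k] \in Q].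
    have GD : Gamma (mkrel D).
      apply: E_rel hc _; apply: E_ext (E_atom [tuple val (m j) | j < k] hQ) => a.
      rewrite inE.
      suff -> : [tuple of map a [tuple val (m j) | j < k]]
              = [tuple tnth (tup N a) (m j) | j < k] by [].
      by apply: eq_from_tnth => j; rewrite tnth_map !tnth_mktuple ?tnth_tup.
    have : rho \in D.
      rewrite inE; suff -> : [tuple tnth rho (m j) | j < k] = x by [].
      by apply: eq_from_tnth => j; rewrite tnth_mktuple (hm j).1.
    move/(hin _ GD); rewrite inE.
    suff -> : [tuple tnth sigma (m j) | j < k] = y by [].
    by apply: eq_from_tnth => j; rewrite tnth_mktuple (hm j).2.
apply: (HR f hf r s hr) => /= j; apply/fP.
have hj : j < N by have := ltn_ord j; rewrite /N => ?; lia.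
exists (Ordinal hj); split.
  by rewrite g1 //= (tnth_nth x0).
rewrite /sigma tnth_tup /lay /ovr /=.
case: ifP => h1; first by have := ltn_ord j; lia.
case: ifP => h2; first by have := ltn_ord j; lia.
by rewrite (tnth_nth x0).
Qed.

Lemma InvshE_sub i (R : {set i.-tuple 'I_n}) :
  Inv (shE Gamma) (mkrel R) -> Gamma (mkrel R).
Proof.
move=> HR; apply: E_rel hc _.
apply: E_ext (E_bigor (s := enum R) (fun r _ => E_hull r)) => a; split.
  by move=> [r [hr hin]]; apply: (key HR _ hin); rewrite -mem_enum.
by move=> h; exists (tup i a); split; [rewrite mem_enum|move=> D _].
Qed.

End D.

Theorem corollary2p6 (n : nat) : 0 < n ->
  (forall Gamma : relset n, closed_pfo Gamma ->
     is_DSM (shE Gamma) /\ (forall R, Inv (shE Gamma) R <-> Gamma R)) /\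
  (forall F : funset n, is_DSM F ->
     closed_pfo (Inv F) /\ (forall f, shE (Inv F) f <-> F f)) /\
  (forall Gamma1 Gamma2 : relset n, closed_pfo Gamma1 -> closed_pfo Gamma2 ->
     ((forall R, Gamma1 R -> Gamma2 R) <->
      (forall f, shE Gamma2 f -> shE Gamma1 f))) /\
  (forall F1 F2 : funset n, is_DSM F1 -> is_DSM F2 ->
     ((forall f, F1 f -> F2 f) <-> (forall R, Inv F2 R -> Inv F1 R))).
Proof.
move=> hn; pose x0 : 'I_n := Ordinal hn.
have P1 (G : relset n) : closed_pfo G -> forall R, Inv (shE G) R <-> G R.
  move=> hc [i R]; split; first exact: (@InvshE_sub n G hc x0 i R).
  by move=> hR f [_ pf]; apply: pf.
have P2 (F : funset n) : is_DSM F -> forall f, shE (Inv F) f <-> F f.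
  move=> hF f; split; first exact: (@shE_Inv n x0 F f hF).
  case: hF => mp _ _ _ hf; split; first exact: mp f hf.
  by move=> R hR; exact: hR f hf.
split; first by move=> G hc; split; [exact: shE_DSM | exact: P1].
split; first by move=> F hF; split; [exact: (@Inv_closed n x0 F hF) | exact: P2].
split.
- move=> G1 G2 h1 h2; split.
  + by move=> sub f [mp pf]; split=> // R hR; apply: pf (sub _ hR).
  + move=> sub R hR; apply/(P1 _ h2) => f hf.
    by apply: ((P1 _ h1 R).2 hR); exact: sub.
- move=> F1 F2 h1 h2; split.
  + by move=> sub R hR f hf; exact: hR f (sub f hf).
  + move=> sub f hf; apply/(P2 _ h2).
    have [mp pf] := (P2 _ h1 f).2 hf.
    by split=> // R hR; apply: pf (sub _ hR).
Qed.
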